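(* Suppose $G$ consists of a single strongly connected component and at least one vertex of $G$ has out-degree greater than one. Then the flow $\psi$ on $\Delta$ is chaotic.
   Context: $G$ is a finite directed graph (loops allowed) with vertex set $V$. $\Omega$ is the set of bi-infinite paths in $G$, i.e. sequences $(x_i)_{i\in\mathbb Z}\in V^{\mathbb Z}$ such that for every $i$ there is an edge from $x_i$ to $x_{i+1}$. Fix $h>0$. $\bar\Delta$ is the set of functions $x:\mathbb R\to V$ that are constant on each interval $[nh,(n+1)h)$, $n\in\mathbb Z$, and satisfy $(x(ih))_{i\in\mathbb Z}\in\Omega$. $\Delta=\{x(\cdot+t): x\in\bar\Delta,\ t\in\mathbb R\}$, with metric $d(x,y)=\sum_{i\in\mathbb Z}4^{-|i|}\frac1h\int_{ih}^{(i+1)h}\delta(x,y,t)\,dt$, where $\delta(x,y,t)=1$ if $x(t)\ne y(t)$ and $0$ otherwise. The flow $\psi:\mathbb R\times\Delta\to\Delta$ is $\psi(t,x)=x(\cdot+t)$. ''$G$ consists of a single strongly connected component'' means that for all $u,v\in V$ (including $u=v$) there is a directed path of positive length from $u$ to $v$. A flow on a metric space $X$ is chaotic if (i) it has sensitive dependence on initial conditions (there is $\delta>0$ such that for every $x\in X$ and every neighborhood $B$ of $x$ there are $y\in B$, $t>0$ with $d(\Phi_t(x),\Phi_t(y))>\delta$), (ii) its periodic points are dense in $X$, and (iii) it is topologically transitive (there is $x\in X$ with $\omega(x)=X$, where $\omega(x)$ is the set of limits of $\Phi_{t_k}(x)$ along sequences $t_k\to+\infty$). *)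

(* Defs.v *)
From Stdlib Require Import Reals Lra ZArith List Classical ClassicalEpsilon.
From Stdlib Require Import Relations.
Open Scope R_scope.

(* Riemann integral of f on [a,b] (0 if f is not Riemann integrable there;
   the value does not depend on the integrability proof, RiemannInt_P5). *)
Definition RInt (f : R -> R) (a b : R) : R :=
  match excluded_middle_informative
          (exists _ : Riemann_integrable f a b, True) with
  | left H => RiemannInt (proj1_sig (constructive_indefinite_description _ H))
  | right _ => 0
  end.

(* The finite directed graph G: vertex type V (finite), edge relation
   (a simple digraph, loops allowed). *)
Definition finite_type (V : Type) : Prop := exists l : list V, forall v, In v l.

(* single strongly connected component: a path of positive length
   between any two (possibly equal) vertices *)
Definition strongly_connected {V : Type} (edge : V -> V -> Prop) : Prop :=
  forall u v : V, clos_trans V edge u v.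

Definition has_branching {V : Type} (edge : V -> V -> Prop) : Prop :=
  exists u v1 v2 : V, v1 <> v2 /\ edge u v1 /\ edge u v2.

Definition Omega {V : Type} (edge : V -> V -> Prop) (w : Z -> V) : Prop :=
  forall i : Z, edge (w i) (w (i + 1)%Z).

Definition DeltaBar {V : Type} (edge : V -> V -> Prop) (h : R) (x : R -> V) : Prop :=
  (forall (n : Z) (t : R), IZR n * h <= t < (IZR n + 1) * h -> x t = x (IZR n * h))
  /\ Omega edge (fun i => x (IZR i * h)).

Definition Delta {V : Type} (edge : V -> V -> Prop) (h : R) (y : R -> V) : Prop :=
  exists x t, DeltaBar edge h x /\ y = (fun s => x (s + t)).

Definition psi {V : Type} (t : R) (x : R -> V) : R -> V := fun s => x (s + t).

Definition delta_ind {V : Type} (x y : R -> V) (t : R) : R :=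
  if excluded_middle_informative (x t <> y t) then 1 else 0.

Definition dterm {V : Type} (h : R) (x y : R -> V) (i : Z) : R :=
  (/ 4) ^ Z.abs_nat i * (/ h * RInt (delta_ind x y) (IZR i * h) ((IZR i + 1) * h)).

(* the series over Z, grouped as  term 0,  term n + term (-n)  (n >= 1) *)
Definition dseq {V : Type} (h : R) (x y : R -> V) (n : nat) : R :=
  match n with
  | O => dterm h x y 0
  | S _ => dterm h x y (Z.of_nat n) + dterm h x y (- Z.of_nat n)
  end.

(* the metric d (the series converges; value 0 as a default otherwise) *)
Definition dist {V : Type} (h : R) (x y : R -> V) : R :=
  match excluded_middle_informative (exists l, infinite_sum (dseq h x y) l) with
  | left H => proj1_sig (constructive_indefinite_description _ H)
  | right _ => 0
  end.

Section Chaos.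
Context {V : Type} (edge : V -> V -> Prop) (h : R).
Let X := Delta edge h.
Let d := dist (V := V) h.

Definition is_neighborhood (x : R -> V) (B : (R -> V) -> Prop) : Prop :=
  exists eps, 0 < eps /\ forall y, X y -> d x y < eps -> B y.

Definition sensitive : Prop :=
  exists del, 0 < del /\
    forall x, X x -> forall B, is_neighborhood x B ->
      exists y t, X y /\ B y /\ 0 < t /\ d (psi t x) (psi t y) > del.

Definition periodic_point (x : R -> V) : Prop :=
  exists T, 0 < T /\ psi T x = x.

Definition periodic_dense : Prop :=
  forall x, X x -> forall eps, 0 < eps ->
    exists p, X p /\ periodic_point p /\ d x p < eps.

Definition omega_limit (x y : R -> V) : Prop :=
  X y /\ exists tk : nat -> R,
    (forall M, exists N, forall k, (N <= k)%nat -> tk k > M) /\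
    Un_cv (fun k => d (psi (tk k) x) y) 0.

Definition top_transitive : Prop :=
  exists x, X x /\ forall y, omega_limit x y <-> X y.

Definition chaotic : Prop := sensitive /\ periodic_dense /\ top_transitive.
End Chaos.

(* Main.v *)
Require Import Defs.
From Stdlib Require Import Reals Lra Lia ZArith List Classical ClassicalEpsilon FunctionalExtensionality Relations.
Open Scope R_scope.

Lemma adapted_open (f : R -> R) a b c : a <= b -> (forall t, a < t < b -> f t = c) ->
  adapted_couple f a b (cons a (cons b nil)) (cons c nil).
Proof.
  intros Hab Hf; unfold adapted_couple; repeat split.
  - red; intros i Hi; simpl in Hi; inversion Hi;
      [ simpl; assumption | lia ].
  - simpl; unfold Rmin; destruct (Rle_dec a b); lra.
  - simpl; unfold Rmax; destruct (Rle_dec a b); lra.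
  - unfold constant_D_eq, open_interval; intros i Hi; simpl in Hi.
    assert (i = 0%nat) by lia; subst; simpl; intros; apply Hf; lra.
Qed.

Lemma integrable_open (f : R -> R) a b c : a <= b -> (forall t, a < t < b -> f t = c) ->
  Riemann_integrable f a b.
Proof.
  intros Hab Hf eps.
  assert (S : IsStepFun f a b).
  { exists (cons a (cons b nil)); exists (cons c nil); apply adapted_open; auto. }
  exists (mkStepFun S). exists (mkStepFun (StepFun_P4 a b 0)); split.
  - intros; simpl; unfold fct_cte; rewrite Rminus_diag, Rabs_R0; lra.
  - rewrite StepFun_P18, Rmult_0_l, Rabs_R0; apply (cond_pos eps).
Qed.

Lemma RInt_open (f : R -> R) a b c : a <= b -> (forall t, a < t < b -> f t = c) ->
  RInt f a b = c * (b - a).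
Proof.
  intros Hab Hf. unfold RInt.
  destruct excluded_middle_informative as [H|H].
  - destruct (constructive_indefinite_description _ H) as [pr Hpr]; simpl.
    rewrite (RiemannInt_P18 pr (RiemannInt_P14 a b c) Hab).
    + apply RiemannInt_P15.
    + intros; unfold fct_cte; apply Hf; auto.
  - exfalso; apply H; exists (integrable_open f a b c Hab Hf); auto.
Qed.

Lemma RInt_bound (f : R -> R) a b : a <= b -> (forall t, 0 <= f t <= 1) ->
  0 <= RInt f a b <= b - a.
Proof.
  intros Hab Hf. unfold RInt.
  destruct excluded_middle_informative as [H|H].
  - destruct (constructive_indefinite_description _ H) as [pr Hpr]; simpl. split.
    + rewrite <- (Rmult_0_l (b - a)), <- (RiemannInt_P15 (RiemannInt_P14 a b 0)).
      apply RiemannInt_P19; auto. intros; unfold fct_cte; apply Hf.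
    + rewrite <- (Rmult_1_l (b - a)), <- (RiemannInt_P15 (RiemannInt_P14 a b 1)).
      apply RiemannInt_P19; auto. intros; unfold fct_cte; apply Hf.
  - lra.
Qed.

Lemma pow_half_le1 k : 0 <= (/2)^k <= 1.
Proof. induction k; simpl; [lra|]. split; nra. Qed.

Lemma pow_half_mono n m : (m <= n)%nat -> (/2)^n <= (/2)^m.
Proof.
  intro H. replace n with (m + (n - m))%nat by lia. rewrite pow_add.
  pose proof (pow_half_le1 m); pose proof (pow_half_le1 (n-m)); nra.
Qed.

Lemma delta_bound {V : Type} (x y : R -> V) t : 0 <= delta_ind x y t <= 1.
Proof. unfold delta_ind; destruct excluded_middle_informative; lra. Qed.

Lemma dterm_bound {V : Type} h (x y : R -> V) i : 0 < h ->
  0 <= dterm h x y i <= (/4) ^ Z.abs_nat i.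
Proof.
  intro Hh. unfold dterm.
  assert (HI := RInt_bound (delta_ind x y) (IZR i * h) ((IZR i + 1) * h) ltac:(nra) (delta_bound x y)).
  assert (0 <= / h * RInt (delta_ind x y) (IZR i * h) ((IZR i + 1) * h) <= 1).
  { split. apply Rmult_le_pos; [apply Rlt_le, Rinv_0_lt_compat; lra| lra].
    replace ((IZR i + 1) * h - IZR i * h) with h in HI by ring.
    apply Rmult_le_reg_l with h; [lra|]. rewrite <- Rmult_assoc, Rinv_r; lra. }
  assert (0 <= (/4) ^ Z.abs_nat i) by (apply pow_le; lra).
  split; nra.
Qed.

Lemma dseq_bound {V : Type} h (x y : R -> V) n : 0 < h ->
  0 <= dseq h x y n <= 2 * (/4) ^ n.
Proof.
  intro Hh. destruct n as [|n]; simpl.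
  - pose proof (dterm_bound h x y 0 Hh); simpl in *; lra.
  - pose proof (dterm_bound h x y (Z.of_nat (S n)) Hh).
    pose proof (dterm_bound h x y (- Z.of_nat (S n)) Hh).
    replace (Z.abs_nat (- Z.of_nat (S n))) with (Z.abs_nat (Z.of_nat (S n))) in H0 by reflexivity. rewrite Zabs2Nat.id in H, H0. simpl in *. lra.
Qed.

Lemma dist_spec {V : Type} h (x y : R -> V) : 0 < h ->
  infinite_sum (dseq h x y) (Defs.dist h x y).
Proof.
  intro Hh. unfold Defs.dist. destruct excluded_middle_informative as [H|H].
  - destruct (constructive_indefinite_description _ H) as [l Hl]; simpl; auto.
  - exfalso; apply H.
    destruct (Rseries_CV_comp (dseq h x y) (fun n => 2 * (/4)^n)) as [l Hl].
    + intro n; apply dseq_bound; auto.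
    + exists (2 * / (1 - /4)). intros eps Heps.
      destruct (GP_infinite (/4) ltac:(rewrite Rabs_right; lra) (eps/2) ltac:(lra)) as [N HN].
      exists N; intros n Hn. specialize (HN n Hn).
      unfold Rdist in *.
      replace (sum_f_R0 (fun n => 2 * (/4)^n) n) with (2 * sum_f_R0 (fun i => (/4)^i) n)
        by (rewrite scal_sum; apply sum_eq; intros; ring).
      replace (sum_f_R0 (fun i => 1 * (/4)^i) n) with (sum_f_R0 (fun i => (/4)^i) n) in HN
        by (apply sum_eq; intros; ring).
      replace (2 * sum_f_R0 (fun i => (/4)^i) n - 2 * / (1 - /4)) with
        (2 * (sum_f_R0 (fun i => (/4)^i) n - / (1 - /4))) by ring.
      rewrite Rabs_mult, Rabs_right by lra. lra.
    + exists l; exact Hl.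
Qed.

Lemma dist_ge0 {V : Type} h (x y : R -> V) : 0 < h -> dseq h x y 0 <= Defs.dist h x y.
Proof.
  intro Hh. apply (sum_incr (dseq h x y) 0 (Defs.dist h x y)).
  - apply dist_spec; auto.
  - intro n; apply dseq_bound; auto.
Qed.

Lemma dist_nonneg {V : Type} h (x y : R -> V) : 0 < h -> 0 <= Defs.dist h x y.
Proof. intro Hh. pose proof (dist_ge0 h x y Hh). pose proof (dseq_bound h x y 0 Hh). lra. Qed.

Lemma sum_half n : sum_f_R0 (fun i => (/2)^i) n <= 2.
Proof.
  rewrite tech3 by lra. pose proof (pow_half_le1 (S n)).
  replace ((1 - (/2) ^ S n) / (1 - /2)) with (2 * (1 - (/2)^S n)) by field. lra.
Qed.

Lemma dist_small {V : Type} h (x y : R -> V) N : 0 < h ->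
  (forall n, (n <= N)%nat -> dseq h x y n = 0) -> Defs.dist h x y <= 4 * (/2)^N.
Proof.
  intros Hh HN.
  assert (Hb : forall n, dseq h x y n <= 2 * (/2)^N * (/2)^n).
  { intro n. destruct (le_lt_dec n N) as [Hn|Hn].
    - rewrite HN by auto. pose proof (pow_half_le1 N); pose proof (pow_half_le1 n); nra.
    - pose proof (dseq_bound h x y n Hh).
      replace (/4) with (/2 * /2) in H by field. rewrite Rpow_mult_distr in H.
      pose proof (pow_half_mono n N ltac:(lia)). pose proof (pow_half_le1 n); nra. }
  apply Rle_cv_lim with (Un := fun n => sum_f_R0 (dseq h x y) n) (Vn := fun _ => 4 * (/2)^N).
  - intro n. apply Rle_trans with (sum_f_R0 (fun i => 2 * (/2)^N * (/2)^i) n).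
    + apply sum_Rle; intros; apply Hb.
    + replace (sum_f_R0 (fun i => 2 * (/2)^N * (/2)^i) n) with (2 * (/2)^N * sum_f_R0 (fun i => (/2)^i) n)
        by (rewrite scal_sum; apply sum_eq; intros; ring). pose proof (sum_half n). pose proof (pow_half_le1 N). nra.
  - apply dist_spec; auto.
  - intros eps Heps; exists 0%nat; intros; unfold Rdist; rewrite Rminus_diag, Rabs_R0; lra.
Qed.

Definition fl (r : R) : Z := (up r - 1)%Z.

Lemma fl_spec r : IZR (fl r) <= r < IZR (fl r) + 1.
Proof.
  unfold fl. destruct (archimed r) as [H1 H2]. rewrite minus_IZR. lra.
Qed.

Lemma fl_bounds a b r : IZR a < r -> r < IZR b -> (a <= fl r < b)%Z.
Proof.
  intros Ha Hb. pose proof (fl_spec r) as [H1 H2]. split.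
  - assert (IZR a < IZR (fl r + 1)) by (rewrite plus_IZR; lra).
    apply lt_IZR in H. lia.
  - assert (IZR (fl r) < IZR b) by lra. apply lt_IZR in H. lia.
Qed.

Lemma fl_unique n r : IZR n <= r < IZR n + 1 -> fl r = n.
Proof.
  intros [H1 H2]. pose proof (fl_spec r) as [H3 H4].
  assert (IZR n < IZR (fl r + 1)) by (rewrite plus_IZR; lra).
  assert (IZR (fl r) < IZR (n + 1)) by (rewrite plus_IZR; lra).
  apply lt_IZR in H; apply lt_IZR in H0. lia.
Qed.

Lemma fl_shift r k : fl (r + IZR k) = (fl r + k)%Z.
Proof.
  apply fl_unique. pose proof (fl_spec r). rewrite plus_IZR. lra.
Qed.

Section Mk.
Context {V : Type} (edge : V -> V -> Prop) (h : R) (Hh : 0 < h).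

Definition mk (w : Z -> V) : R -> V := fun s => w (fl (s / h)).
Definition mkS (w : Z -> V) (t : R) : R -> V := fun s => w (fl ((s + t) / h)).

Lemma mk_DeltaBar w : Omega edge w -> DeltaBar edge h (mk w).
Proof.
  intro Hw. split.
  - intros n t Ht. unfold mk.
    rewrite (fl_unique n (t / h)).
    + rewrite (fl_unique n (IZR n * h / h)); auto.
      replace (IZR n * h / h) with (IZR n) by (field; lra). lra.
    + split.
      * apply Rmult_le_reg_r with h; auto. replace (t / h * h) with t by (field; lra). lra.
      * apply Rmult_lt_reg_r with h; auto. replace (t / h * h) with t by (field; lra). lra.
  - intro i. unfold mk.
    replace (IZR i * h / h) with (IZR i) by (field; lra).
    replace (IZR (i + 1) * h / h) with (IZR (i + 1)) by (field; lra).
    rewrite !(fl_unique _ _ (conj (Rle_refl _) (Rlt_plus_1 _))). apply Hw.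
Qed.

Lemma mkS_Delta w t : Omega edge w -> Defs.Delta edge h (mkS w t).
Proof.
  intro Hw. exists (mk w), t. split; [apply mk_DeltaBar; auto|].
  reflexivity.
Qed.

Lemma Delta_inv y : Defs.Delta edge h y -> exists w t, Omega edge w /\ y = mkS w t.
Proof.
  intros [x [t [[H1 H2] ->]]].
  exists (fun i => x (IZR i * h)), t. split; auto.
  apply functional_extensionality; intro s. unfold mkS.
  pose proof (fl_spec ((s + t) / h)) as [Ha Hb].
  apply H1. split.
  - apply Rmult_le_reg_r with (/h); [apply Rinv_0_lt_compat; auto|].
    replace (IZR (fl ((s + t) / h)) * h * / h) with (IZR (fl ((s + t) / h))) by (field; lra).
    exact Ha.
  - apply Rmult_lt_reg_r with (/h); [apply Rinv_0_lt_compat; auto|].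
    replace ((IZR (fl ((s + t) / h)) + 1) * h * / h) with (IZR (fl ((s + t) / h)) + 1) by (field; lra).
    exact Hb.
Qed.

Lemma psi_mkS w t T : psi T (mkS w t) = mkS w (t + T).
Proof.
  apply functional_extensionality; intro s. unfold psi, mkS. f_equal. f_equal. f_equal. ring.
Qed.

Lemma mkS_periodic w t P : (forall j, w (j + P)%Z = w j) ->
  psi (IZR P * h) (mkS w t) = mkS w t.
Proof.
  intro HP. rewrite psi_mkS. apply functional_extensionality; intro s. unfold mkS.
  replace ((s + (t + IZR P * h)) / h) with ((s + t) / h + IZR P) by (field; lra).
  rewrite fl_shift. apply HP.
Qed.

Lemma RInt_delta0 (x y : R -> V) a b : a <= b -> (forall s, a < s < b -> x s = y s) ->
  RInt (delta_ind x y) a b = 0.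
Proof.
  intros Hab H. rewrite (RInt_open _ a b 0); [ring|auto|].
  intros s Hs. unfold delta_ind. destruct excluded_middle_informative as [n|]; auto.
  exfalso; apply n; auto.
Qed.

Lemma RInt_delta1 (x y : R -> V) a b : a <= b -> (forall s, a < s < b -> x s <> y s) ->
  RInt (delta_ind x y) a b = b - a.
Proof.
  intros Hab H. rewrite (RInt_open _ a b 1); [ring|auto|].
  intros s Hs. unfold delta_ind. destruct excluded_middle_informative as [|n]; auto.
  exfalso; apply n; auto.
Qed.

Lemma dterm0 (x y : R -> V) i : (forall s, IZR i * h < s < (IZR i + 1) * h -> x s = y s) ->
  dterm h x y i = 0.
Proof.
  intro H. unfold dterm. rewrite RInt_delta0; [ring| nra | auto].
Qed.

Lemma close w1 w2 t N :
  (forall j, (Z.abs (j - fl (t / h)) <= Z.of_nat N + 1)%Z -> w1 j = w2 j) ->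
  Defs.dist h (mkS w1 t) (mkS w2 t) <= 4 * (/2)^N.
Proof.
  intro Hw. apply dist_small; auto.
  assert (Hi : forall i, (Z.abs i <= Z.of_nat N)%Z -> dterm h (mkS w1 t) (mkS w2 t) i = 0).
  { intros i Hi. apply dterm0. intros s Hs. unfold mkS. apply Hw.
    pose proof (fl_spec (t / h)) as [Ht1 Ht2].
    assert (Hs1 : IZR i < s / h).
    { apply Rmult_lt_reg_r with h; auto. replace (s / h * h) with s by (field; lra). lra. }
    assert (Hs2 : s / h < IZR i + 1).
    { apply Rmult_lt_reg_r with h; auto. replace (s / h * h) with s by (field; lra). lra. }
    assert (Hb : (i + fl (t / h) <= fl ((s + t) / h) < i + fl (t / h) + 2)%Z).
    { apply fl_bounds; rewrite ?plus_IZR;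
      replace ((s + t) / h) with (s / h + t / h) by (field; lra); lra. }
    lia. }
  intros n Hn. destruct n as [|n]; simpl.
  - apply Hi. simpl. lia.
  - rewrite !Hi; [ring| lia | lia].
Qed.

Lemma far (x y : R -> V) : (forall s, 0 < s < h -> x s <> y s) -> 1 <= Defs.dist h x y.
Proof.
  intro H. eapply Rle_trans; [|apply dist_ge0; auto]. simpl. unfold dterm.
  rewrite RInt_delta1.
  - simpl. replace ((0 + 1) * h - 0 * h) with h by ring. field_simplify; lra.
  - lra.
  - intros s Hs; apply H; lra.
Qed.

End Mk.
Close Scope R_scope.

Section Comb.
Context {V : Type} (edge : V -> V -> Prop) (d : V).

Definition chain (l : list V) : Prop :=
  forall i, (S i < length l)%nat -> edge (nth i l d) (nth (S i) l d).

Lemma nth_glue1 l1 a l2 i : (i <= length l1)%nat -> nth i (l1 ++ a :: l2) d = nth i (l1 ++ a :: nil) d.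
Proof.
  intro Hi. destruct (Nat.eq_dec i (length l1)) as [->|Hne].
  - rewrite !app_nth2 by lia. rewrite Nat.sub_diag. reflexivity.
  - rewrite !app_nth1 by lia. reflexivity.
Qed.

Lemma glue l1 a l2 : chain (l1 ++ a :: nil) -> chain (a :: l2) -> chain (l1 ++ a :: l2).
Proof.
  intros H1 H2 i Hi. rewrite length_app in Hi; simpl in Hi.
  destruct (le_lt_dec (S i) (length l1)) as [Hs|Hs].
  - rewrite (nth_glue1 l1 a l2 i), (nth_glue1 l1 a l2 (S i)) by lia. apply H1. rewrite length_app; simpl; lia.
  - rewrite !app_nth2 by lia. replace (S i - length l1)%nat with (S (i - length l1)) by lia.
    apply H2. simpl; lia.
Qed.

Lemma chain_prefix l1 l2 : chain (l1 ++ l2) -> chain l1.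
Proof.
  intros H i Hi. rewrite <- !(app_nth1 l1 l2) by lia. apply H. rewrite length_app; lia.
Qed.

Lemma chain_suffix l1 l2 : chain (l1 ++ l2) -> chain l2.
Proof.
  intros H i Hi. specialize (H (length l1 + i)%nat). rewrite !app_nth2 in H by lia.
  replace (length l1 + i - length l1)%nat with i in H by lia.
  replace (S (length l1 + i) - length l1)%nat with (S i) in H by lia.
  apply H. rewrite length_app; lia.
Qed.

Lemma conn_exists u v : clos_trans V edge u v -> exists c, chain (u :: c ++ v :: nil).
Proof.
  induction 1 as [x y Hxy | x y z _ [c1 H1] _ [c2 H2]].
  - exists nil. intros i Hi. simpl in Hi. assert (i = 0%nat) by lia. subst. exact Hxy.
  - exists (c1 ++ y :: c2).
    replace (x :: (c1 ++ y :: c2) ++ z :: nil) with ((x :: c1) ++ y :: (c2 ++ z :: nil))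
      by (simpl; rewrite <- app_assoc; reflexivity).
    apply glue; auto.
Qed.

Definition lstream (l : list V) (s : nat -> V) (n : nat) : V :=
  if Nat.ltb n (length l) then nth n l d else s (n - length l)%nat.

Lemma lstream_chain l s : l <> nil -> chain l -> edge (last l d) (s 0%nat) ->
  (forall n, edge (s n) (s (S n))) -> forall n, edge (lstream l s n) (lstream l s (S n)).
Proof.
  intros Hl Hc He Hs n. unfold lstream.
  destruct (Nat.ltb_spec n (length l)); destruct (Nat.ltb_spec (S n) (length l)).
  - apply Hc; auto.
  - assert (n = length l - 1)%nat by lia. replace (S n - length l)%nat with 0%nat by lia.
    destruct (exists_last Hl) as [r [z Hrz]]. subst l.
    rewrite app_nth2; rewrite length_app in *; simpl in *; [|lia].
    rewrite last_last in He. replace (n - length r)%nat with 0%nat by lia. exact He.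
  - lia.
  - replace (S n - length l)%nat with (S (n - length l)) by lia. apply Hs.
Qed.

End Comb.

Section Zpaths.
Context {V : Type} (edge : V -> V -> Prop) (d : V).

Definition splice (w : Z -> V) (M : Z) (f : nat -> V) : Z -> V :=
  fun j => if Z.leb j M then w j else f (Z.to_nat (j - M)).

Lemma splice_Omega w M f : Omega edge w -> f 0%nat = w M ->
  (forall n, edge (f n) (f (S n))) -> Omega edge (splice w M f).
Proof.
  intros Hw Hf0 Hf j. unfold splice.
  destruct (Z.leb_spec j M); destruct (Z.leb_spec (j + 1) M).
  - apply Hw.
  - assert (j = M) by lia. subst j. rewrite <- Hf0.
    replace (Z.to_nat (M + 1 - M)) with 1%nat by lia. apply Hf.
  - lia.
  - replace (Z.to_nat (j + 1 - M)) with (S (Z.to_nat (j - M))) by lia. apply Hf.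
Qed.

Lemma nth_map_d (f : nat -> V) l i : (i < length l)%nat -> nth i (map f l) d = f (nth i l 0%nat).
Proof.
  revert i; induction l as [|x l IH]; intros i Hi; simpl in *; [lia|].
  destruct i; auto. apply IH; lia.
Qed.

Lemma chain_end_edge C x i : chain edge d (C ++ x :: nil) -> S i = length C -> edge (nth i C d) x.
Proof.
  intros H Hi. specialize (H i). rewrite length_app in H. cbn [length] in H.
  rewrite app_nth1 in H by lia. rewrite app_nth2 in H by lia.
  replace (S i - length C)%nat with 0%nat in H by lia. apply H. lia.
Qed.

Definition wordZ (w : Z -> V) (a : Z) (K : nat) : list V :=
  map (fun k => w (a + Z.of_nat k)%Z) (seq 0 K).

Lemma wordZ_length w a K : length (wordZ w a K) = K.
Proof. unfold wordZ. rewrite length_map, length_seq. reflexivity. Qed.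

Lemma wordZ_nth w a K i : (i < K)%nat -> nth i (wordZ w a K) d = w (a + Z.of_nat i)%Z.
Proof.
  intro Hi. unfold wordZ. rewrite nth_map_d by (rewrite length_seq; auto).
  rewrite seq_nth by auto. reflexivity.
Qed.

Lemma wordZ_chain w a K : Omega edge w -> chain edge d (wordZ w a K).
Proof.
  intros Hw i Hi. rewrite wordZ_length in Hi. rewrite !wordZ_nth by lia.
  replace (a + Z.of_nat (S i))%Z with (a + Z.of_nat i + 1)%Z by lia. apply Hw.
Qed.

Lemma wordZ_S w a K : wordZ w a (S K) = wordZ w a K ++ w (a + Z.of_nat K)%Z :: nil.
Proof. unfold wordZ. rewrite seq_S, map_app. reflexivity. Qed.

Lemma periodic_exists w a K : Omega edge w -> (forall u v, clos_trans V edge u v) ->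
  exists p L, (0 < L)%Z /\ Omega edge p /\ (forall j, p (j + L)%Z = p j) /\
    (forall j, (a <= j <= a + Z.of_nat K)%Z -> p j = w j).
Proof.
  intros Hw Hsc.
  destruct (conn_exists edge d _ _ (Hsc (w (a + Z.of_nat K)%Z) (w a))) as [c Hc].
  set (C := wordZ w a (S K) ++ c).
  assert (HC : chain edge d (C ++ w a :: nil)).
  { unfold C. rewrite wordZ_S. rewrite <- !app_assoc. simpl. apply glue; auto.
    rewrite <- wordZ_S. apply wordZ_chain; auto. }
  assert (HL : (length C = S K + length c)%nat) by (unfold C; rewrite length_app, wordZ_length; auto).
  set (L := Z.of_nat (length C)).
  assert (HL0 : (0 < L)%Z) by (unfold L; lia).
  assert (HC0 : nth 0 C d = w a).
  { unfold C. rewrite app_nth1 by (rewrite wordZ_length; lia). rewrite wordZ_nth by lia.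
    f_equal; lia. }
  exists (fun j => nth (Z.to_nat ((j - a) mod L)) C d), L. split; [auto|]. split; [|split].
  - intro j. pose proof (Z.mod_pos_bound (j - a) L HL0) as Hk.
    pose proof (Z_div_mod_eq_full (j - a) L) as Hdm.
    set (k := ((j - a) mod L)%Z) in *. set (q := ((j - a) / L)%Z) in *.
    destruct (Z.eq_dec (k + 1) L) as [Heq|Hne].
    + assert (H0 : ((j + 1 - a) mod L)%Z = 0%Z).
      { symmetry; apply Z.mod_unique with (q + 1)%Z; lia. }
      rewrite H0. change (Z.to_nat 0) with 0%nat. rewrite HC0.
      apply chain_end_edge; auto. unfold L in *; lia.
    + assert (H0 : ((j + 1 - a) mod L)%Z = (k + 1)%Z).
      { symmetry; apply Z.mod_unique with q; lia. }
      rewrite H0. replace (Z.to_nat (k + 1)) with (S (Z.to_nat k)) by lia.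
      apply (chain_prefix edge d C (w a :: nil) HC). unfold L in *; lia.
  - intro j. f_equal. f_equal. replace (j + L - a)%Z with ((j - a) + 1 * L)%Z by lia.
    apply Z_mod_plus_full.
  - intros j Hj. rewrite Z.mod_small by (unfold L; lia).
    unfold C. rewrite app_nth1 by (rewrite wordZ_length; lia).
    rewrite wordZ_nth by lia. f_equal; lia.
Qed.

Lemma out_edge0 u v : clos_trans V edge u v -> exists z, edge u z.
Proof. induction 1; eauto. Qed.

Lemma out_edge v : clos_trans V edge v v -> exists z, edge v z.
Proof. apply out_edge0. Qed.

Lemma in_edge0 u v : clos_trans V edge u v -> exists z, edge z v.
Proof. induction 1; eauto. Qed.

Lemma diverge w M u v1 v2 : Omega edge w -> (forall u v, clos_trans V edge u v) ->
  v1 <> v2 -> edge u v1 -> edge u v2 ->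
  exists w' k, Omega edge w' /\ (forall j, (j <= M)%Z -> w' j = w j) /\ (M < k)%Z /\ w' k <> w k.
Proof.
  intros Hw Hsc Hv Hu1 Hu2.
  assert (Hs : forall z, exists z', edge z z') by (intro z; apply out_edge, Hsc).
  set (succ := fun z => proj1_sig (constructive_indefinite_description _ (Hs z))).
  assert (Hsucc : forall z, edge z (succ z)) by (intro z; exact (proj2_sig (constructive_indefinite_description _ (Hs z)))).
  destruct (conn_exists edge d _ _ (Hsc (w M) u)) as [c Hc].
  set (F0 := w M :: c ++ u :: nil).
  set (k := (M + Z.of_nat (length F0))%Z).
  set (v := if excluded_middle_informative (w k = v1) then v2 else v1).
  assert (Hvk : v <> w k) by (unfold v; destruct excluded_middle_informative; congruence).
  assert (Huv : edge u v) by (unfold v; destruct excluded_middle_informative; auto).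
  set (s := fun n => Nat.iter n succ v).
  set (f := lstream d F0 s).
  exists (splice w M f), k. split; [|split; [|split]].
  - apply splice_Omega; [exact Hw| |].
    + unfold f, lstream. simpl. reflexivity.
    + apply lstream_chain.
      * unfold F0; discriminate.
      * exact Hc.
      * unfold F0. replace (w M :: c ++ u :: nil) with ((w M :: c) ++ u :: nil) by reflexivity.
        rewrite last_last. exact Huv.
      * intro n. unfold s. simpl. apply Hsucc.
  - intros j Hj. unfold splice. destruct (Z.leb_spec j M); [auto|lia].
  - unfold k, F0. simpl. lia.
  - unfold splice. destruct (Z.leb_spec k M) as [Hk|Hk]; [unfold k in Hk; unfold F0 in Hk; simpl in Hk; lia|].
    unfold f, lstream. replace (Z.to_nat (k - M)) with (length F0) by (unfold k; lia).
    rewrite Nat.ltb_irrefl, Nat.sub_diag. simpl. exact Hvk.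
Qed.

End Zpaths.

Section Univ.
Context {V : Type} (edge : V -> V -> Prop) (d : V) (lV : list V) (HlV : forall v, In v lV)
  (Hsc : forall u v, clos_trans V edge u v).

Fixpoint alll (n : nat) : list (list V) :=
  match n with
  | O => nil :: nil
  | S n => flat_map (fun v => map (cons v) (alll n)) lV
  end.

Lemma alll_In u : In u (alll (length u)).
Proof.
  induction u as [|x u IH]; simpl; auto.
  apply in_flat_map. exists x; split; auto. apply in_map; auto.
Qed.

Lemma alll_len n u : In u (alll n) -> length u = n.
Proof.
  revert u; induction n as [|n IH]; intros u Hu; simpl in Hu.
  - destruct Hu as [<-|[]]; auto.
  - apply in_flat_map in Hu as [x [_ Hx]]. apply in_map_iff in Hx as [u' [<- Hu']].
    simpl; f_equal; auto.
Qed.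

Definition isch (u : list V) : bool :=
  if excluded_middle_informative (chain edge d u) then true else false.

Definition wordsL (L : nat) := filter isch (alll L).
Definition allw (n : nat) := flat_map wordsL (seq 1 n).

Lemma allw_In u n : chain edge d u -> (1 <= length u <= n)%nat -> In u (allw n).
Proof.
  intros Hc Hl. apply in_flat_map. exists (length u). split.
  - apply in_seq; lia.
  - apply filter_In. split; [apply alll_In|]. unfold isch.
    destruct excluded_middle_informative; tauto.
Qed.

Lemma allw_prop u n : In u (allw n) -> u <> nil /\ chain edge d u.
Proof.
  intro H. apply in_flat_map in H as [L [HL Hu]]. apply in_seq in HL.
  apply filter_In in Hu as [Hu Hc]. apply alll_len in Hu. split.
  - intro E; subst u; simpl in *; lia.
  - unfold isch in Hc; destruct excluded_middle_informative; [auto|discriminate].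
Qed.

Definition conn (u v : list V -> list V) := u.

Definition cn (u v : V) : list V :=
  proj1_sig (constructive_indefinite_description _ (conn_exists edge d u v (Hsc u v))).

Lemma cn_spec u v : chain edge d (u :: cn u v ++ v :: nil).
Proof. unfold cn. exact (proj2_sig (constructive_indefinite_description _ (conn_exists edge d u v (Hsc u v)))). Qed.

Definition ext (P w : list V) : list V := P ++ cn (last P d) (hd d w) ++ w.

Lemma ext_chain P w : P <> nil -> chain edge d P -> w <> nil -> chain edge d w -> chain edge d (ext P w).
Proof.
  intros HP HcP Hw Hcw. unfold ext.
  destruct (exists_last HP) as [P' [z ->]]. rewrite last_last.
  destruct w as [|y w']; [congruence|]. simpl.
  rewrite <- app_assoc. simpl. apply glue; auto.
  replace (z :: cn z y ++ y :: w') with ((z :: cn z y) ++ y :: w') by reflexivity.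
  apply glue; auto. apply cn_spec.
Qed.

Lemma fold_prefix ws P : exists r, fold_left ext ws P = P ++ r.
Proof.
  revert P; induction ws as [|w ws IH]; intro P; simpl.
  - exists nil; rewrite app_nil_r; auto.
  - destruct (IH (ext P w)) as [r Hr]. rewrite Hr. unfold ext. exists ((cn (last P d) (hd d w) ++ w) ++ r).
    rewrite <- !app_assoc. reflexivity.
Qed.

Lemma fold_chain ws P : (forall w, In w ws -> w <> nil /\ chain edge d w) -> P <> nil -> chain edge d P ->
  chain edge d (fold_left ext ws P).
Proof.
  revert P; induction ws as [|w ws IH]; intros P Hws HP HcP; simpl; auto.
  apply IH.
  - intros; apply Hws; simpl; auto.
  - unfold ext. destruct P; [congruence|discriminate].
  - apply ext_chain; auto; apply Hws; simpl; auto.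
Qed.

Lemma fold_occ ws P w : In w ws -> exists Q R, fold_left ext ws P = Q ++ w ++ R /\ (length P <= length Q)%nat.
Proof.
  revert P; induction ws as [|w' ws IH]; intros P Hw; simpl in Hw; [destruct Hw|].
  destruct Hw as [->|Hw].
  - simpl. destruct (fold_prefix ws (ext P w)) as [r Hr]. rewrite Hr. unfold ext.
    exists (P ++ cn (last P d) (hd d w)), r. split.
    + rewrite <- !app_assoc. reflexivity.
    + rewrite length_app; lia.
  - destruct (IH (ext P w') Hw) as [Q [R [HQ HL]]]. exists Q, R. split; auto.
    unfold ext in HL. rewrite length_app in HL. lia.
Qed.

Fixpoint Pn (n : nat) : list V :=
  match n with
  | O => d :: nil
  | S n => fold_left ext (allw (S n)) (Pn n)
  end.

Lemma Pn_chain n : Pn n <> nil /\ chain edge d (Pn n).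
Proof.
  induction n as [|n [IH1 IH2]]; simpl.
  - split; [discriminate|]. intros i Hi; simpl in Hi; lia.
  - split.
    + destruct (fold_prefix (allw (S n)) (Pn n)) as [r Hr]. rewrite Hr.
      destruct (Pn n); [congruence|discriminate].
    + apply fold_chain; auto. intros; apply allw_prop with (S n); auto.
Qed.

Lemma Pn_prefix n m : (n <= m)%nat -> exists r, Pn m = Pn n ++ r.
Proof.
  induction 1 as [|m Hm [r Hr]].
  - exists nil; rewrite app_nil_r; auto.
  - simpl. destruct (fold_prefix (allw (S m)) (Pn m)) as [r' Hr']. rewrite Hr', Hr.
    exists (r ++ r'). rewrite app_assoc; auto.
Qed.

Lemma Pn_len n : (n < length (Pn n))%nat.
Proof.
  induction n as [|n IH]; simpl; [lia|].
  assert (Hd : In (d :: nil) (allw (S n))).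
  { apply allw_In; simpl; [intros i Hi; simpl in Hi; lia|lia]. }
  destruct (fold_occ _ (Pn n) _ Hd) as [Q [R [HQ HL]]]. rewrite HQ.
  rewrite !length_app. simpl. lia.
Qed.

Definition fz (k : nat) : V := nth k (Pn (S k)) d.

Lemma fz_eq n k : (k < length (Pn n))%nat -> fz k = nth k (Pn n) d.
Proof.
  intro Hk. unfold fz. destruct (le_lt_dec n (S k)) as [H|H].
  - destruct (Pn_prefix _ _ H) as [r ->]. apply app_nth1; auto.
  - destruct (Pn_prefix (S k) n ltac:(lia)) as [r ->]. symmetry. apply app_nth1.
    pose proof (Pn_len (S k)); lia.
Qed.

Lemma fz_chain k : edge (fz k) (fz (S k)).
Proof.
  pose proof (Pn_len (S (S k))).
  rewrite (fz_eq (S (S k)) k), (fz_eq (S (S k)) (S k)) by lia.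
  apply (proj2 (Pn_chain (S (S k)))). lia.
Qed.

Lemma fz_0 : fz 0 = d.
Proof. rewrite (fz_eq 0 0) by (simpl; lia). reflexivity. Qed.

Lemma fz_occ u M : chain edge d u -> u <> nil ->
  exists m, (M <= m)%nat /\ forall i, (i < length u)%nat -> fz (m + i) = nth i u d.
Proof.
  intros Hc Hu. assert (Hu0 : length u <> 0%nat) by (destruct u; [congruence|discriminate]).
  pose proof (Nat.le_max_l M (length u)); pose proof (Nat.le_max_r M (length u)).
  set (n := Nat.max M (length u)) in *.
  assert (HIn : In u (allw (S n))).
  { apply allw_In; auto. lia. }
  destruct (fold_occ _ (Pn n) _ HIn) as [Q [R [HQ HL]]].
  pose proof (Pn_len n).
  exists (length Q). split; [lia|]. intros i Hi.
  rewrite (fz_eq (S n)).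
  - simpl. rewrite HQ. rewrite app_nth2 by lia. rewrite app_nth1 by lia.
    f_equal; lia.
  - simpl. rewrite HQ. rewrite !length_app. lia.
Qed.

Definition prv (v : V) : V :=
  proj1_sig (constructive_indefinite_description _ (in_edge0 edge v v (Hsc v v))).

Lemma prv_spec v : edge (prv v) v.
Proof. unfold prv. exact (proj2_sig (constructive_indefinite_description _ (in_edge0 edge v v (Hsc v v)))). Qed.

Definition gb (k : nat) : V := Nat.iter k prv d.

Definition univ (j : Z) : V := if Z.leb 0 j then fz (Z.to_nat j) else gb (Z.to_nat (- j)).

Lemma univ_Omega : Omega edge univ.
Proof.
  intro j. unfold univ. destruct (Z.leb_spec 0 j); destruct (Z.leb_spec 0 (j + 1)).
  - replace (Z.to_nat (j + 1)) with (S (Z.to_nat j)) by lia. apply fz_chain.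
  - lia.
  - assert (j = -1)%Z by lia. subst. simpl. rewrite fz_0. apply prv_spec.
  - replace (Z.to_nat (- j)) with (S (Z.to_nat (- (j + 1)))) by lia. simpl. apply prv_spec.
Qed.

Lemma univ_pos j : (0 <= j)%Z -> univ j = fz (Z.to_nat j).
Proof. intro H. unfold univ. destruct (Z.leb_spec 0 j); [auto|lia]. Qed.

End Univ.
Open Scope R_scope.

Lemma small_N eps : 0 < eps -> exists N, 4 * (/2)^N < eps.
Proof.
  intro He. destruct (pow_lt_1_zero (/2) ltac:(rewrite Rabs_right; lra) (eps/4) ltac:(lra)) as [N HN].
  exists N. specialize (HN N (le_n N)). rewrite Rabs_right in HN by (apply Rle_ge, pow_le; lra). lra.
Qed.

Lemma mkS_shift {V : Type} h (w : Z -> V) t D : 0 < h ->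
  mkS h w (t + IZR D * h) = mkS h (fun j => w (j + D)%Z) t.
Proof.
  intro Hh. apply functional_extensionality; intro s. unfold mkS.
  replace ((s + (t + IZR D * h)) / h) with ((s + t) / h + IZR D) by (field; lra).
  rewrite fl_shift. reflexivity.
Qed.

Theorem mainTheorem12 (V : Type) (edge : V -> V -> Prop) (h : R) :
  0 < h -> finite_type V -> strongly_connected edge -> has_branching edge ->
  chaotic edge h.
Proof.
  intros Hh [lV HlV] Hsc [u [v1 [v2 [Hv [Hu1 Hu2]]]]].
  unfold strongly_connected in Hsc.
  unfold chaotic, sensitive, periodic_dense, top_transitive. split; [|split].
  -
    exists (1/2). split; [lra|]. intros x Hx B [eps [Heps HB]].
    destruct (Delta_inv edge h Hh x Hx) as [w [t [Hw ->]]].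
    destruct (small_N eps Heps) as [N HN].
    set (m0 := fl (t / h)).
    set (M := (m0 + Z.of_nat N + 1)%Z).
    destruct (diverge edge u w M u v1 v2 Hw Hsc Hv Hu1 Hu2) as [w' [k [Hw' [Hag [HMk Hdiff]]]]].
    exists (mkS h w' t), (IZR k * h - t). split; [apply mkS_Delta; auto|]. split; [|split].
    + apply HB; [apply mkS_Delta; auto|].
      eapply Rle_lt_trans; [|exact HN]. apply close; auto.
      intros j Hj. symmetry. apply Hag. fold m0 in Hj. unfold M. lia.
    + pose proof (fl_spec (t / h)) as [_ Ht]. fold m0 in Ht.
      assert (IZR m0 + 2 <= IZR k) by (rewrite <- (plus_IZR m0 2); apply IZR_le; unfold M in HMk; lia).
      assert (t < (IZR m0 + 1) * h).
      { apply Rmult_lt_reg_r with (/h); [apply Rinv_0_lt_compat; auto|].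
        replace ((IZR m0 + 1) * h * / h) with (IZR m0 + 1) by (field; lra). exact Ht. }
      nra.
    + rewrite !psi_mkS. replace (t + (IZR k * h - t)) with (0 + IZR k * h) by ring.
      rewrite !mkS_shift by auto.
      assert (1 <= Defs.dist h (mkS h (fun j => w (j + k)%Z) 0) (mkS h (fun j => w' (j + k)%Z) 0)).
      { apply far; auto. intros s Hs. unfold mkS.
        rewrite (fl_unique 0 ((s + 0) / h)).
        - simpl. intro E; apply Hdiff; symmetry; exact E.
        - split.
          + apply Rmult_le_reg_r with h; auto. replace ((s + 0) / h * h) with s by (field; lra). lra.
          + apply Rmult_lt_reg_r with h; auto. replace ((s + 0) / h * h) with s by (field; lra). lra. }
      lra.
  -
    intros x Hx eps Heps.
    destruct (Delta_inv edge h Hh x Hx) as [w [t [Hw ->]]].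
    destruct (small_N eps Heps) as [N HN].
    set (m0 := fl (t / h)).
    destruct (periodic_exists edge u w (m0 - Z.of_nat N - 1) (2 * N + 2) Hw Hsc)
      as [p [L [HL [Hp [Hper Hpag]]]]].
    exists (mkS h p t). split; [apply mkS_Delta; auto|]. split.
    + exists (IZR L * h). split.
      * apply Rmult_lt_0_compat; auto. apply IZR_lt; auto.
      * apply mkS_periodic; auto.
    + eapply Rle_lt_trans; [|exact HN]. apply close; auto.
      intros j Hj. symmetry. apply Hpag. fold m0 in Hj. lia.
  -
    set (U := univ edge u lV Hsc).
    assert (HU : Omega edge U) by apply univ_Omega, HlV.
    exists (mkS h U 0). split; [apply mkS_Delta; auto|].
    intro y. split; [intros [Hy _]; exact Hy|intro Hy]. split; [exact Hy|].
    destruct (Delta_inv edge h Hh y Hy) as [v [t [Hvv ->]]].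
    set (m0 := fl (t / h)).
    assert (Hocc : forall k : nat, exists m, (k <= m)%nat /\ forall i, (i < 2 * k + 3)%nat ->
      fz edge u lV Hsc (m + i) = v (m0 - Z.of_nat k - 1 + Z.of_nat i)%Z).
    { intro k. destruct (fz_occ edge u lV HlV Hsc (wordZ v (m0 - Z.of_nat k - 1) (2 * k + 3)) k)
        as [m [Hm Hmi]].
      - apply wordZ_chain; auto.
      - intro E. pose proof (wordZ_length v (m0 - Z.of_nat k - 1) (2 * k + 3)) as E2.
        rewrite E in E2. simpl in E2. lia.
      - exists m. split; auto. intros i Hi. rewrite Hmi by (rewrite wordZ_length; auto).
        apply wordZ_nth; auto. }
    set (mk := fun k => proj1_sig (constructive_indefinite_description _ (Hocc k))).
    assert (Hmk : forall k, (k <= mk k)%nat /\ forall i, (i < 2 * k + 3)%nat ->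
      fz edge u lV Hsc (mk k + i) = v (m0 - Z.of_nat k - 1 + Z.of_nat i)%Z).
    { intro k. exact (proj2_sig (constructive_indefinite_description _ (Hocc k))). }
    set (D := fun k => (Z.of_nat (mk k) - (m0 - Z.of_nat k - 1))%Z).
    exists (fun k => t + IZR (D k) * h). split.
    + intro M'. set (n0 := up ((M' - t) / h)).
      exists (Z.to_nat (n0 + m0)). intros k Hk.
      destruct (Hmk k) as [Hk1 _].
      assert (HD : IZR n0 <= IZR (D k)) by (apply IZR_le; unfold D; lia).
      destruct (archimed ((M' - t) / h)) as [Ha _]. fold n0 in Ha.
      assert (M' - t < IZR (D k) * h).
      { apply Rmult_lt_reg_r with (/h); [apply Rinv_0_lt_compat; auto|].
        replace (IZR (D k) * h * / h) with (IZR (D k)) by (field; lra).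
        unfold Rdiv in Ha. lra. }
      lra.
    + intros eps Heps. destruct (small_N eps Heps) as [N HN]. exists N. intros k Hk.
      rewrite psi_mkS. replace (0 + (t + IZR (D k) * h)) with (t + IZR (D k) * h) by ring.
      rewrite mkS_shift by auto.
      assert (Hc : Defs.dist h (mkS h (fun j => U (j + D k)%Z) t) (mkS h v t) <= 4 * (/2)^k).
      { apply close; auto. intros j Hj. fold m0 in Hj. destruct (Hmk k) as [Hk1 Hk2].
        unfold U. rewrite univ_pos by (unfold D; lia).
        replace (Z.to_nat (j + D k)) with (mk k + Z.to_nat (j - m0 + Z.of_nat k + 1))%nat
          by (unfold D; lia).
        rewrite Hk2 by lia. f_equal. lia. }
      pose proof (dist_nonneg h (mkS h (fun j => U (j + D k)%Z) t) (mkS h v t) Hh).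
      pose proof (pow_half_mono k N Hk).
      unfold Rdist. rewrite Rminus_0_r, Rabs_right by lra. lra.
Qed.
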